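(* Let $G$ be any GP 2 host graph in which every node is marked grey and is not a root and every edge is unmarked, with $n$ nodes and $m$ edges. When the GP 2 program is-dag is executed on $G$ (via the GP 2-to-C compiler, under the cost model below), it terminates in time $\mathrm{O}(n+m)$, i.e. linear in the size of $G$.
   Context: GP 2 semantics. Host graphs are finite directed graphs whose nodes and edges carry labels (lists of integers and strings) and marks (nodes: unmarked, red, green, blue, grey; edges: unmarked, red, green, blue, dashed); some nodes are roots. A rule is applied by finding an injective label- and mark-compatible match of its left-hand side (mark ''any'' matches every mark; roots match roots) satisfying the dangling condition, then changing matched items as prescribed by the right-hand side. Commands: a rule set call applies one applicable rule, failing if none applies; $P;Q$ sequencing; $P!$ iterates $P$ until it fails (break exits the innermost loop); ''try $C$ then $P$ else $Q$'' runs $C$ and continues with $P$ on its result if it succeeded, else $Q$ on the original graph; ''if $C$ then $P$ else $Q$'' runs $C$ on a copy then $P$ or $Q$ on the original; fail causes failure. Cost model (updated GP 2-to-C compiler). Host nodes are stored in separate linked lists per node mark, roots in a list, and each node has a two-dimensional array of linked lists of incident edges indexed by edge mark and orientation (incoming, outgoing, loop). Each elementary operation takes constant time: fetch first/next node with a given mark; fetch first/next root; given a node, fetch first/next incoming, outgoing or loop edge with a given mark; read degrees, mark, root status, source, target; set/clear/test a ''matched'' flag. Matching is a search using these operations; completing a rule application once a match is found takes constant time for rules that only change marks/roots. Running time is the total cost; the size of $G$ is $n+m$. The program is-dag (labels unchanged; rule edges directed from node 1 to node 2): Main = (init; DFS!; try unroot else break)!; Check DFS = try next_edge then (try {move, ignore}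 else (set_flag; break)) else (try loop; try back else break) Check = if flag then fail - init: grey non-root node becomes a red root. - unroot: red root becomes blue non-root. - set_flag: red root becomes green root. - flag: green root; no change. - next_edge: red root 1, node 2 of any mark, unmarked edge 1→2; edge becomes red. - ignore: red root 1, blue node 2, red edge 1→2; edge becomes blue. - move: red root 1, grey node 2, red edge 1→2; node 1 becomes red non-root, node 2 red root, edge dashed. - back: red non-root 1, red root 2, dashed edge 1→2; node 1 becomes red root, node 2 blue non-root, edge blue. - loop: red root with an unmarked loop; node becomes green root. *)

(* Defs.v *)
From Stdlib Require Import List Arith Bool ZArith String.
Import ListNotations.

Inductive atom := AInt (z : Z) | AStr (s : string).
Definition label := list atom.

Inductive nmark := NUnmarked | NRed | NGreen | NBlue | NGrey.
Inductive emark := EUnmarked | ERed | EGreen | EBlue | EDashed.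

Definition nmark_eqb (a b : nmark) : bool :=
  match a, b with
  | NUnmarked, NUnmarked | NRed, NRed | NGreen, NGreen
  | NBlue, NBlue | NGrey, NGrey => true
  | _, _ => false
  end.

Definition emark_eqb (a b : emark) : bool :=
  match a, b with
  | EUnmarked, EUnmarked | ERed, ERed | EGreen, EGreen
  | EBlue, EBlue | EDashed, EDashed => true
  | _, _ => false
  end.

(* Nodes are 0 .. nnodes-1; edge i (i < length edges) goes from
   fst (nth i edges) to snd (nth i edges). Parallel edges and loops allowed. *)
Record hgraph := mkHG {
  nnodes   : nat;
  edges    : list (nat * nat);
  nlabel   : nat -> label;
  elabel   : nat -> label;
  nmark_of : nat -> nmark;
  is_root  : nat -> bool;
  emark_of : nat -> emark
}.

Definition nedges (G : hgraph) : nat := List.length (edges G).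
Definition src (G : hgraph) (i : nat) : nat := fst (nth i (edges G) (0, 0)).
Definition tgt (G : hgraph) (i : nat) : nat := snd (nth i (edges G) (0, 0)).

Definition wf_graph (G : hgraph) : Prop :=
  forall i, i < nedges G -> src G i < nnodes G /\ tgt G i < nnodes G.

Definition initial_graph (G : hgraph) : Prop :=
  (forall v, v < nnodes G -> nmark_of G v = NGrey /\ is_root G v = false) /\
  (forall i, i < nedges G -> emark_of G i = EUnmarked).

Definition node_list G mu :=
  filter (fun v => nmark_eqb (nmark_of G v) mu) (seq 0 (nnodes G)).
Definition root_list G := filter (is_root G) (seq 0 (nnodes G)).
Definition out_list G v mu :=
  filter (fun i => Nat.eqb (src G i) v && negb (Nat.eqb (tgt G i) v)
                   && emark_eqb (emark_of G i) mu) (seq 0 (nedges G)).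
Definition in_list G v mu :=
  filter (fun i => Nat.eqb (tgt G i) v && negb (Nat.eqb (src G i) v)
                   && emark_eqb (emark_of G i) mu) (seq 0 (nedges G)).
Definition loop_list G v mu :=
  filter (fun i => Nat.eqb (src G i) v && Nat.eqb (tgt G i) v
                   && emark_eqb (emark_of G i) mu) (seq 0 (nedges G)).

(* Search through a list: each fetch (first/next, including the final fetch
   returning null) costs 1, plus the cost of checking the candidate
   (which may itself be a nested search). *)
Fixpoint scan {A B : Type} (l : list A) (chk : A -> option B * nat)
  : option B * nat :=
  match l with
  | [] => (None, 1)
  | x :: l' =>
      let (r, c) := chk x in
      match r with
      | Some b => (Some b, 1 + c)
      | None => let (r', c') := scan l' chk in (r', 1 + c + c')
      end
  end.

Definition upd {A : Type} (f : nat -> A) (x : nat) (a : A) : nat -> A :=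
  fun y => if Nat.eqb y x then a else f y.

Definition set_node (G : hgraph) (v : nat) (mu : nmark) (r : bool) : hgraph :=
  mkHG (nnodes G) (edges G) (nlabel G) (elabel G)
       (upd (nmark_of G) v mu) (upd (is_root G) v r) (emark_of G).

Definition set_edge (G : hgraph) (e : nat) (mu : emark) : hgraph :=
  mkHG (nnodes G) (edges G) (nlabel G) (elabel G)
       (nmark_of G) (is_root G) (upd (emark_of G) e mu).

Inductive rule :=
  r_init | r_unroot | r_set_flag | r_flag | r_next_edge
| r_ignore | r_move | r_back | r_loop.

Definition is_red G v := nmark_eqb (nmark_of G v) NRed.

Definition root_of_mark G mu : option nat * nat :=
  scan (root_list G)
       (fun v => (if nmark_eqb (nmark_of G v) mu then Some v else None, 1)).

(* Search for a red root and an edge of mark emu in list [lst G v emu]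
   satisfying [ok]; the root is matched first (roots first strategy). *)
Definition root_edge_search G (lst : hgraph -> nat -> emark -> list nat)
  (emu : emark) (ok : nat -> nat -> bool) : option nat * nat :=
  scan (root_list G)
    (fun v => if is_red G v then
                let (o, c) := scan (lst G v emu)
                                   (fun e => (if ok v e then Some e else None, 1)) in
                (o, 1 + c)
              else (None, 1)).

(* Attempt to apply a rule: resulting graph (if a match was found) and cost
   (search cost, plus 1 for completing the application once a match is found). *)
Definition rule_step (r : rule) (G : hgraph) : option hgraph * nat :=
  match r with
  | r_init =>
      let (o, c) := scan (node_list G NGrey)
                         (fun v => (if negb (is_root G v) then Some v else None, 1)) in
      match o with Some v => (Some (set_node G v NRed true), c + 1) | None => (None, c) end
  | r_unroot =>
      let (o, c) := root_of_mark G NRed in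
      match o with Some v => (Some (set_node G v NBlue false), c + 1) | None => (None, c) end
  | r_set_flag =>
      let (o, c) := root_of_mark G NRed in
      match o with Some v => (Some (set_node G v NGreen true), c + 1) | None => (None, c) end
  | r_flag =>
      let (o, c) := root_of_mark G NGreen in
      match o with Some _ => (Some G, c + 1) | None => (None, c) end
  | r_loop =>
      let (o, c) := root_edge_search G loop_list EUnmarked (fun _ _ => true) in
      match o with
      | Some e => (Some (set_node G (src G e) NGreen true), c + 1)
      | None => (None, c) end
  | r_next_edge =>
      (* node 2: any mark; only injectivity (node 2 <> node 1) is checked *)
      let (o, c) := root_edge_search G out_list EUnmarked
                      (fun v e => negb (Nat.eqb (tgt G e) v)) in
      match o with Some e => (Some (set_edge G e ERed), c + 1) | None => (None, c) end
  | r_ignore =>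
      let (o, c) := root_edge_search G out_list ERed
                      (fun v e => negb (Nat.eqb (tgt G e) v)
                                  && nmark_eqb (nmark_of G (tgt G e)) NBlue
                                  && negb (is_root G (tgt G e))) in
      match o with Some e => (Some (set_edge G e EBlue), c + 1) | None => (None, c) end
  | r_move =>
      let (o, c) := root_edge_search G out_list ERed
                      (fun v e => negb (Nat.eqb (tgt G e) v)
                                  && nmark_eqb (nmark_of G (tgt G e)) NGrey
                                  && negb (is_root G (tgt G e))) in
      match o with
      | Some e =>
          (Some (set_edge (set_node (set_node G (src G e) NRed false)
                                    (tgt G e) NRed true) e EDashed), c + 1)
      | None => (None, c) end
  | r_back =>
      (* node 2 (the red root) is matched first, then an incoming dashed edge
         whose source is a red non-root *)
      let (o, c) := root_edge_search G in_list EDashed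
                      (fun v e => negb (Nat.eqb (src G e) v)
                                  && is_red G (src G e)
                                  && negb (is_root G (src G e))) in
      match o with
      | Some e =>
          (Some (set_edge (set_node (set_node G (src G e) NRed true)
                                    (tgt G e) NBlue false) e EBlue), c + 1)
      | None => (None, c) end
  end.

Fixpoint call_rules (rs : list rule) (G : hgraph) : option hgraph * nat :=
  match rs with
  | [] => (None, 0)
  | r :: rs' =>
      let (o, c) := rule_step r G in
      match o with
      | Some G' => (Some G', c)
      | None => let (o', c') := call_rules rs' G in (o', c + c')
      end
  end.

Inductive cmd :=
| Call (rs : list rule)
| Skip
| Fail
| Break
| Seq (c1 c2 : cmd)
| Loop (c : cmd)
| TryElse (c p q : cmd)
| IfElse (c p q : cmd).

Inductive outcome := Ok (G : hgraph) | Failed | Broke (G : hgraph).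

(* Each command step costs 1 (control overhead); undoing the changes of a
   failed/probed condition is charged at most the cost of that condition
   (hence the factor 2). Divergence = no derivation. *)
Inductive exec : cmd -> hgraph -> outcome -> nat -> Prop :=
| ex_call rs G o c :
    call_rules rs G = (o, c) ->
    exec (Call rs) G (match o with Some G' => Ok G' | None => Failed end) (c + 1)
| ex_skip G : exec Skip G (Ok G) 1
| ex_fail G : exec Fail G Failed 1
| ex_break G : exec Break G (Broke G) 1
| ex_seq_ok c1 c2 G G' o k1 k2 :
    exec c1 G (Ok G') k1 -> exec c2 G' o k2 -> exec (Seq c1 c2) G o (k1 + k2 + 1)
| ex_seq_fail c1 c2 G k1 :
    exec c1 G Failed k1 -> exec (Seq c1 c2) G Failed (k1 + 1)
| ex_seq_break c1 c2 G G' k1 :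
    exec c1 G (Broke G') k1 -> exec (Seq c1 c2) G (Broke G') (k1 + 1)
| ex_loop_ok c G G' o k1 k2 :
    exec c G (Ok G') k1 -> exec (Loop c) G' o k2 -> exec (Loop c) G o (k1 + k2 + 1)
| ex_loop_fail c G k1 :
    exec c G Failed k1 -> exec (Loop c) G (Ok G) (2 * k1 + 1)
| ex_loop_break c G G' k1 :
    exec c G (Broke G') k1 -> exec (Loop c) G (Ok G') (k1 + 1)
| ex_try_ok c p q G G' o k1 k2 :
    exec c G (Ok G') k1 -> exec p G' o k2 -> exec (TryElse c p q) G o (k1 + k2 + 1)
| ex_try_fail c p q G o k1 k2 :
    exec c G Failed k1 -> exec q G o k2 -> exec (TryElse c p q) G o (2 * k1 + k2 + 1)
| ex_try_break c p q G G' k1 :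
    exec c G (Broke G') k1 -> exec (TryElse c p q) G (Broke G') (k1 + 1)
| ex_if_ok c p q G G' o k1 k2 :
    exec c G (Ok G') k1 -> exec p G o k2 -> exec (IfElse c p q) G o (2 * k1 + k2 + 1)
| ex_if_fail c p q G o k1 k2 :
    exec c G Failed k1 -> exec q G o k2 -> exec (IfElse c p q) G o (2 * k1 + k2 + 1)
| ex_if_break c p q G G' k1 :
    exec c G (Broke G') k1 -> exec (IfElse c p q) G (Broke G') (k1 + 1).

(* DFS = try next_edge then (try {move, ignore} else (set_flag; break))
                        else (try loop; try back else break) *)
Definition DFS : cmd :=
  TryElse (Call [r_next_edge])
          (TryElse (Call [r_move; r_ignore]) Skip (Seq (Call [r_set_flag]) Break))
          (Seq (TryElse (Call [r_loop]) Skip Skip)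
               (TryElse (Call [r_back]) Skip Break)).

Definition Check : cmd := IfElse (Call [r_flag]) Fail Skip.

(* Main = (init; DFS!; try unroot else break)!; Check *)
Definition is_dag : cmd :=
  Seq (Loop (Seq (Call [r_init])
                 (Seq (Loop DFS) (TryElse (Call [r_unroot]) Skip Break))))
      Check.

(* Main.v *)
Require Import Defs.
From Stdlib Require Import List Arith Bool ZArith String Lia.
Import ListNotations.
Notation length := List.length.

Lemma nmark_eqb_eq a b : nmark_eqb a b = true <-> a = b.
Proof. destruct a, b; simpl; split; congruence. Qed.
Lemma emark_eqb_eq a b : emark_eqb a b = true <-> a = b.
Proof. destruct a, b; simpl; split; congruence. Qed.

Definition cnt (p : nat -> bool) (n : nat) := length (filter p (seq 0 n)).

Lemma cnt_S p n : cnt p (S n) = cnt p n + Nat.b2n (p n).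
Proof. unfold cnt. rewrite seq_S, filter_app, length_app. simpl. destruct (p n); simpl; lia. Qed.

Lemma cnt_ext p q n : (forall x, x < n -> p x = q x) -> cnt p n = cnt q n.
Proof. induction n; intros H; auto. rewrite !cnt_S, IHn by (intros; apply H; lia). rewrite H by lia. auto. Qed.

Lemma cnt_le p n : cnt p n <= n.
Proof. induction n; auto. rewrite cnt_S. destruct (p n); simpl; lia. Qed.

Lemma cnt_upd p q n e : e < n -> (forall x, x <> e -> q x = p x) ->
  cnt q n + Nat.b2n (p e) = cnt p n + Nat.b2n (q e).
Proof.
  induction n; intros He H; [lia|].
  rewrite !cnt_S. destruct (Nat.eq_dec e n).
  - subst. rewrite (cnt_ext q p) by (intros; apply H; lia). lia.
  - rewrite (H n) by auto. specialize (IHn ltac:(lia) H). lia.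
Qed.

Lemma len_le1 (l : list nat) : NoDup l -> (forall x y, In x l -> In y l -> x = y) -> length l <= 1.
Proof.
  destruct l as [|a [|b l]]; simpl; intros Hn H; try lia.
  inversion Hn; subst. exfalso. apply H2. left. apply H; simpl; auto.
Qed.

Lemma nodup_fs f n : NoDup (filter f (seq 0 n)).
Proof. apply NoDup_filter, seq_NoDup. Qed.

Lemma scan_some {A B} (l : list A) (chk : A -> option B * nat) b c :
  scan l chk = (Some b, c) -> exists x, In x l /\ fst (chk x) = Some b.
Proof.
  induction l as [|a l IH] in c |- *; simpl; intros H; [discriminate|].
  destruct (chk a) as [r c0] eqn:E. destruct r.
  - inversion H; subst. exists a. rewrite E. auto.
  - destruct (scan l chk) as [r' c'] eqn:E2. inversion H; subst.
    destruct (IH _ eq_refl) as [x [Hx Hx']]. eauto.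
Qed.

Lemma scan_cost {A B} (l : list A) (chk : A -> option B * nat) a :
  (forall x, In x l -> snd (chk x) <= a) -> snd (scan l chk) <= 1 + length l * (1 + a).
Proof.
  induction l as [|y l IH]; simpl; intros H; [lia|].
  specialize (H y (or_introl eq_refl)) as Hy.
  destruct (chk y) as [r c0] eqn:E. simpl in Hy. destruct r; simpl.
  - nia.
  - assert (Hc : snd (scan l chk) <= 1 + length l * (1 + a)) by (apply IH; intros; apply H; auto).
    destruct (scan l chk) as [r' c'] eqn:E2. simpl in *. nia.
Qed.

Lemma scan_cheap {A B} (l : list A) (chk : A -> option B * nat) a :
  (forall x, In x l -> snd (chk x) <= a) ->
  (length l <= 1 \/ exists x l', l = x :: l' /\ fst (chk x) <> None) ->
  snd (scan l chk) <= 2 + a.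
Proof.
  intros H [Hl | [x [l' [-> Hx]]]].
  - pose proof (scan_cost l chk a H). nia.
  - simpl. specialize (H x (or_introl eq_refl)).
    destruct (chk x) as [[r|] c0]; simpl in *; [lia| congruence].
Qed.

Lemma res_some G lst emu ok e c :
  root_edge_search G lst emu ok = (Some e, c) ->
  exists v, In v (root_list G) /\ is_red G v = true /\ In e (lst G v emu) /\ ok v e = true.
Proof.
  unfold root_edge_search. intros H. apply scan_some in H as [v [Hv H]].
  exists v. destruct (is_red G v) eqn:Er; [|discriminate].
  destruct (scan (lst G v emu) _) as [o c0] eqn:E. simpl in H. subst.
  apply scan_some in E as [x [Hx Hx']]. simpl in Hx'.
  destruct (ok v x) eqn:Eo; inversion Hx'; subst. auto.
Qed.

Lemma res_cost G lst emu ok :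
  length (root_list G) <= 1 ->
  (forall v, In v (root_list G) -> length (lst G v emu) <= 1 \/
      exists x l', lst G v emu = x :: l' /\ ok v x = true) ->
  snd (root_edge_search G lst emu ok) <= 6.
Proof.
  intros Hr H. unfold root_edge_search. apply (scan_cheap _ _ 4); [|auto].
  intros v Hv. destruct (is_red G v); simpl; [|lia].
  destruct (scan (lst G v emu) _) as [o c0] eqn:E. simpl.
  assert (c0 <= 3); [|lia].
  change c0 with (snd (o, c0)). rewrite <- E. apply (scan_cheap _ _ 1).
  - intros; destruct (ok v x); simpl; lia.
  - destruct (H v Hv) as [Hl | [x [l' [E1 E2]]]]; auto.
    right. exists x, l'. rewrite E1, E2. simpl. split; congruence.
Qed.

Lemma root_of_mark_some G mu v c : root_of_mark G mu = (Some v, c) ->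
  In v (root_list G) /\ nmark_of G v = mu.
Proof.
  unfold root_of_mark. intros H. apply scan_some in H as [x [Hx H]]. simpl in H.
  destruct (nmark_eqb (nmark_of G x) mu) eqn:E; inversion H; subst.
  apply nmark_eqb_eq in E. auto.
Qed.

Lemma root_of_mark_cost G mu : length (root_list G) <= 1 -> snd (root_of_mark G mu) <= 3.
Proof.
  intros H. unfold root_of_mark. apply (scan_cheap _ _ 1); [|auto].
  intros. destruct (nmark_eqb _ _); simpl; lia.
Qed.

Lemma in_root_list G v : In v (root_list G) <-> v < nnodes G /\ is_root G v = true.
Proof. unfold root_list. rewrite filter_In, in_seq. intuition lia. Qed.
Lemma in_node_list G mu v : In v (node_list G mu) -> v < nnodes G /\ nmark_of G v = mu.
Proof. unfold node_list. rewrite filter_In, in_seq, nmark_eqb_eq. intuition lia. Qed.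
Lemma in_out_list G v mu e : In e (out_list G v mu) ->
  e < nedges G /\ src G e = v /\ tgt G e <> v /\ emark_of G e = mu.
Proof.
  unfold out_list. rewrite filter_In, in_seq. intros [H1 H2].
  apply andb_prop in H2 as [H2 H3]. apply andb_prop in H2 as [H2 H4].
  apply Nat.eqb_eq in H2. apply negb_true_iff, Nat.eqb_neq in H4. apply emark_eqb_eq in H3.
  intuition lia.
Qed.
Lemma in_in_list G v mu e : In e (in_list G v mu) ->
  e < nedges G /\ tgt G e = v /\ src G e <> v /\ emark_of G e = mu.
Proof.
  unfold in_list. rewrite filter_In, in_seq. intros [H1 H2].
  apply andb_prop in H2 as [H2 H3]. apply andb_prop in H2 as [H2 H4].
  apply Nat.eqb_eq in H2. apply negb_true_iff, Nat.eqb_neq in H4. apply emark_eqb_eq in H3.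
  intuition lia.
Qed.
Lemma in_loop_list G v mu e : In e (loop_list G v mu) ->
  e < nedges G /\ src G e = v /\ tgt G e = v /\ emark_of G e = mu.
Proof.
  unfold loop_list. rewrite filter_In, in_seq. intros [H1 H2].
  apply andb_prop in H2 as [H2 H3]. apply andb_prop in H2 as [H2 H4].
  apply Nat.eqb_eq in H2. apply Nat.eqb_eq in H4. apply emark_eqb_eq in H3.
  intuition lia.
Qed.

Record Cinv (G : hgraph) : Prop := {
 c_wf : wf_graph G;
 c_root : forall u v, u < nnodes G -> v < nnodes G -> is_root G u = true -> is_root G v = true -> u = v;
 c_grey : forall v, v < nnodes G -> nmark_of G v = NGrey -> is_root G v = false;
 c_dash : forall i j, i < nedges G -> j < nedges G -> emark_of G i = EDashed -> emark_of G j = EDashed -> tgt G i = tgt G j -> i = j;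
 c_dashg : forall i, i < nedges G -> emark_of G i = EDashed -> nmark_of G (tgt G i) <> NGrey;
 c_red : forall i j, i < nedges G -> j < nedges G -> emark_of G i = ERed -> emark_of G j = ERed -> i = j }.

Definition NoRedE G := forall i, i < nedges G -> emark_of G i <> ERed.
Definition NoRedRoot G := forall v, v < nnodes G -> is_root G v = true -> nmark_of G v <> NRed.
Definition NoRoot G := forall v, v < nnodes G -> is_root G v = false.
Definition Dinv G := Cinv G /\ (NoRedE G \/ NoRedRoot G).
Definition Oinv G := Cinv G /\ NoRoot G /\ NoRedE G.

Definition Phi G :=
  2 * cnt (fun i => emark_eqb (emark_of G i) EUnmarked) (nedges G)
  + 2 * cnt (fun v => nmark_eqb (nmark_of G v) NGrey) (nnodes G)
  + cnt (fun i => emark_eqb (emark_of G i) EDashed) (nedges G).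

Lemma Phi_bound G : Phi G <= 3 * (nnodes G + nedges G).
Proof.
  unfold Phi. pose proof (cnt_le (fun i => emark_eqb (emark_of G i) EUnmarked) (nedges G)).
  pose proof (cnt_le (fun v => nmark_eqb (nmark_of G v) NGrey) (nnodes G)).
  pose proof (cnt_le (fun i => emark_eqb (emark_of G i) EDashed) (nedges G)). lia.
Qed.

Lemma nn_sn G v mu r : nnodes (set_node G v mu r) = nnodes G. Proof. reflexivity. Qed.
Lemma ne_sn G v mu r : nedges (set_node G v mu r) = nedges G. Proof. reflexivity. Qed.
Lemma src_sn G v mu r i : src (set_node G v mu r) i = src G i. Proof. reflexivity. Qed.
Lemma tgt_sn G v mu r i : tgt (set_node G v mu r) i = tgt G i. Proof. reflexivity. Qed.
Lemma nm_sn G v mu r : nmark_of (set_node G v mu r) = upd (nmark_of G) v mu. Proof. reflexivity. Qed.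
Lemma ir_sn G v mu r : is_root (set_node G v mu r) = upd (is_root G) v r. Proof. reflexivity. Qed.
Lemma em_sn G v mu r : emark_of (set_node G v mu r) = emark_of G. Proof. reflexivity. Qed.
Lemma nn_se G e mu : nnodes (set_edge G e mu) = nnodes G. Proof. reflexivity. Qed.
Lemma ne_se G e mu : nedges (set_edge G e mu) = nedges G. Proof. reflexivity. Qed.
Lemma src_se G e mu i : src (set_edge G e mu) i = src G i. Proof. reflexivity. Qed.
Lemma tgt_se G e mu i : tgt (set_edge G e mu) i = tgt G i. Proof. reflexivity. Qed.
Lemma nm_se G e mu : nmark_of (set_edge G e mu) = nmark_of G. Proof. reflexivity. Qed.
Lemma ir_se G e mu : is_root (set_edge G e mu) = is_root G. Proof. reflexivity. Qed.
Lemma em_se G e mu : emark_of (set_edge G e mu) = upd (emark_of G) e mu. Proof. reflexivity. Qed.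

#[global] Hint Rewrite nn_sn ne_sn src_sn tgt_sn nm_sn ir_sn em_sn nn_se ne_se src_se tgt_se nm_se ir_se em_se : gp.

Lemma upd_eq {A} (f : nat -> A) x a : upd f x a x = a.
Proof. unfold upd. rewrite Nat.eqb_refl. auto. Qed.
Lemma upd_neq {A} (f : nat -> A) x a y : y <> x -> upd f x a y = f y.
Proof. unfold upd. intros H. apply Nat.eqb_neq in H. rewrite H. auto. Qed.

Lemma Phi_set_node G v mu r : v < nnodes G ->
  Phi (set_node G v mu r) + 2 * Nat.b2n (nmark_eqb (nmark_of G v) NGrey)
  = Phi G + 2 * Nat.b2n (nmark_eqb mu NGrey).
Proof.
  intros Hv. unfold Phi. autorewrite with gp.
  pose proof (cnt_upd (fun x => nmark_eqb (nmark_of G x) NGrey)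
     (fun x => nmark_eqb (upd (nmark_of G) v mu x) NGrey) (nnodes G) v Hv) as H.
  simpl in H. rewrite upd_eq in H.
  assert (H' : forall x, x <> v -> nmark_eqb (upd (nmark_of G) v mu x) NGrey = nmark_eqb (nmark_of G x) NGrey)
    by (intros; rewrite upd_neq; auto).
  specialize (H H'). lia.
Qed.

Lemma Phi_set_edge G e mu : e < nedges G ->
  Phi (set_edge G e mu) + 2 * Nat.b2n (emark_eqb (emark_of G e) EUnmarked)
     + Nat.b2n (emark_eqb (emark_of G e) EDashed)
  = Phi G + 2 * Nat.b2n (emark_eqb mu EUnmarked) + Nat.b2n (emark_eqb mu EDashed).
Proof.
  intros He. unfold Phi. autorewrite with gp.
  pose proof (cnt_upd (fun x => emark_eqb (emark_of G x) EUnmarked)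
     (fun x => emark_eqb (upd (emark_of G) e mu x) EUnmarked) (nedges G) e He) as H.
  pose proof (cnt_upd (fun x => emark_eqb (emark_of G x) EDashed)
     (fun x => emark_eqb (upd (emark_of G) e mu x) EDashed) (nedges G) e He) as H2.
  simpl in H, H2. rewrite upd_eq in H, H2.
  specialize (H ltac:(intros; rewrite upd_neq; auto)).
  specialize (H2 ltac:(intros; rewrite upd_neq; auto)). lia.
Qed.

Lemma Cinv_set_node G v mu r :
  Cinv G -> v < nnodes G -> mu <> NGrey ->
  (r = true -> forall u, u < nnodes G -> u <> v -> is_root G u = false) ->
  Cinv (set_node G v mu r).
Proof.
  intros HC Hv Hmu Hr. constructor.
  - exact (c_wf _ HC).
  - intros u w Hu Hw H1 H2. autorewrite with gp in *.
    destruct (Nat.eq_dec u v); destruct (Nat.eq_dec w v); subst;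
      rewrite ?upd_eq, ?upd_neq in * by auto; auto.
    + subst. rewrite Hr in H2 by auto. discriminate.
    + subst. rewrite Hr in H1 by auto. discriminate.
    + eapply (c_root _ HC); eauto.
  - intros u Hu H. autorewrite with gp in *. destruct (Nat.eq_dec u v); subst; rewrite ?upd_eq, ?upd_neq in * by auto.
    + congruence.
    + apply (c_grey _ HC); auto.
  - exact (c_dash _ HC).
  - intros i Hi Hd. autorewrite with gp in *. destruct (Nat.eq_dec (tgt G i) v) as [E|E].
    + rewrite E, upd_eq. auto.
    + rewrite upd_neq by auto. apply (c_dashg _ HC); auto.
  - exact (c_red _ HC).
Qed.

Lemma Cinv_set_edge G e mu :
  Cinv G -> e < nedges G ->
  (mu = ERed -> forall j, j < nedges G -> j <> e -> emark_of G j <> ERed) ->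
  (mu = EDashed -> nmark_of G (tgt G e) <> NGrey /\
      forall j, j < nedges G -> j <> e -> emark_of G j = EDashed -> tgt G j <> tgt G e) ->
  Cinv (set_edge G e mu).
Proof.
  intros HC He Hr Hd. constructor.
  - exact (c_wf _ HC).
  - exact (c_root _ HC).
  - exact (c_grey _ HC).
  - intros i j Hi Hj H1 H2 H3. autorewrite with gp in *.
    destruct (Nat.eq_dec i e); destruct (Nat.eq_dec j e); subst;
      rewrite ?upd_eq, ?upd_neq in * by auto; auto.
    + destruct (Hd H1) as [_ Hx]. exfalso; apply (Hx j); auto.
    + destruct (Hd H2) as [_ Hx]. exfalso; apply (Hx i); auto.
    + eapply (c_dash _ HC); eauto.
  - intros i Hi H. autorewrite with gp in *. destruct (Nat.eq_dec i e); subst; rewrite ?upd_eq, ?upd_neq in * by auto.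
    + apply (Hd H).
    + apply (c_dashg _ HC); auto.
  - intros i j Hi Hj H1 H2. autorewrite with gp in *.
    destruct (Nat.eq_dec i e); destruct (Nat.eq_dec j e); subst;
      rewrite ?upd_eq, ?upd_neq in * by auto; auto.
    + exfalso; apply (Hr H1 j); auto.
    + exfalso; apply (Hr H2 i); auto.
    + eapply (c_red _ HC); eauto.
Qed.

Lemma root_len G : Cinv G -> length (root_list G) <= 1.
Proof.
  intros HC. apply len_le1. apply nodup_fs.
  intros x y Hx Hy. apply in_root_list in Hx, Hy. eapply (c_root _ HC); intuition eauto.
Qed.

Lemma out_red_len G v : Cinv G -> length (out_list G v ERed) <= 1.
Proof.
  intros HC. apply len_le1. apply nodup_fs.
  intros x y Hx Hy. apply in_out_list in Hx, Hy. eapply (c_red _ HC); intuition eauto.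
Qed.

Lemma in_dash_len G v : Cinv G -> length (in_list G v EDashed) <= 1.
Proof.
  intros HC. apply len_le1. apply nodup_fs.
  intros x y Hx Hy. apply in_in_list in Hx, Hy. eapply (c_dash _ HC); intuition (eauto; congruence).
Qed.

Lemma rule_cost r G : Cinv G -> snd (rule_step r G) <= 7.
Proof.
  intros HC. pose proof (root_len G HC) as Hr.
  destruct r; unfold rule_step.
  - match goal with |- context [scan ?l ?f] => assert (snd (scan l f) <= 3) end.
    { apply (scan_cheap _ _ 1). intros; destruct (negb _); simpl; lia.
      destruct (node_list G NGrey) as [|x l'] eqn:E; [left; simpl; lia|].
      right. exists x, l'. split; auto.
      assert (Hx : In x (node_list G NGrey)) by (rewrite E; left; auto).
      apply in_node_list in Hx as [Hx1 Hx2]. rewrite (c_grey _ HC x) by auto. simpl. congruence. }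
    destruct (scan _ _) as [[v|] c0]; simpl in *; lia.
  - pose proof (root_of_mark_cost G NRed Hr).
    destruct (root_of_mark G NRed) as [[v|] c0]; simpl in *; lia.
  - pose proof (root_of_mark_cost G NRed Hr).
    destruct (root_of_mark G NRed) as [[v|] c0]; simpl in *; lia.
  - pose proof (root_of_mark_cost G NGreen Hr).
    destruct (root_of_mark G NGreen) as [[v|] c0]; simpl in *; lia.
  - match goal with |- context [root_edge_search ?G ?l ?m ?ok] =>
      assert (snd (root_edge_search G l m ok) <= 6) end.
    { apply res_cost; auto. intros v Hv.
      destruct (out_list G v EUnmarked) as [|x l'] eqn:E; [left; simpl; lia|].
      right. exists x, l'. split; auto.
      assert (Hx : In x (out_list G v EUnmarked)) by (rewrite E; left; auto).
      apply in_out_list in Hx. apply negb_true_iff, Nat.eqb_neq. intuition. }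
    destruct (root_edge_search _ _ _ _) as [[v|] c0]; simpl in *; lia.
  - match goal with |- context [root_edge_search ?G ?l ?m ?ok] =>
      assert (snd (root_edge_search G l m ok) <= 6) end.
    { apply res_cost; auto. intros v Hv. left. apply out_red_len; auto. }
    destruct (root_edge_search _ _ _ _) as [[v|] c0]; simpl in *; lia.
  - match goal with |- context [root_edge_search ?G ?l ?m ?ok] =>
      assert (snd (root_edge_search G l m ok) <= 6) end.
    { apply res_cost; auto. intros v Hv. left. apply out_red_len; auto. }
    destruct (root_edge_search _ _ _ _) as [[v|] c0]; simpl in *; lia.
  - match goal with |- context [root_edge_search ?G ?l ?m ?ok] =>
      assert (snd (root_edge_search G l m ok) <= 6) end.
    { apply res_cost; auto. intros v Hv. left. apply in_dash_len; auto. }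
    destruct (root_edge_search _ _ _ _) as [[v|] c0]; simpl in *; lia.
  - match goal with |- context [root_edge_search ?G ?l ?m ?ok] =>
      assert (snd (root_edge_search G l m ok) <= 6) end.
    { apply res_cost; auto. intros v Hv.
      destruct (loop_list G v EUnmarked) as [|x l'] eqn:E; [left; simpl; lia|].
      right. exists x, l'. auto. }
    destruct (root_edge_search _ _ _ _) as [[v|] c0]; simpl in *; lia.
Qed.

Lemma is_red_eq G v : is_red G v = true -> nmark_of G v = NRed.
Proof. unfold is_red. apply nmark_eqb_eq. Qed.

Lemma L_init G G' c : Oinv G -> rule_step r_init G = (Some G', c) -> Dinv G' /\ Phi G' < Phi G.
Proof.
  intros [HC [HNR HNE]]. unfold rule_step.
  destruct (scan _ _) as [[v|] c0] eqn:Hs; intro H; inversion H; subst; clear H.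
  apply scan_some in Hs as [x [Hx Hx']]. simpl in Hx'.
  destruct (negb (is_root G x)); inversion Hx'; subst.
  apply in_node_list in Hx as [Hv Hg].
  split; [split|].
  - apply Cinv_set_node; auto. discriminate.
  - left. exact HNE.
  - pose proof (Phi_set_node G v NRed true Hv) as H. rewrite Hg in H. simpl in H. lia.
Qed.

Lemma L_unroot G G' c : Dinv G -> rule_step r_unroot G = (Some G', c) -> Oinv G' /\ Phi G' <= Phi G.
Proof.
  intros [HC HD]. unfold rule_step.
  destruct (root_of_mark G NRed) as [[v|] c0] eqn:Hs; intro H; inversion H; subst; clear H.
  apply root_of_mark_some in Hs as [Hv Hr]. apply in_root_list in Hv as [Hv Hroot].
  split; [split; [|split]|].
  - apply Cinv_set_node; auto. discriminate. discriminate.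
  - intros u Hu. autorewrite with gp in *. destruct (Nat.eq_dec u v); subst.
    + apply upd_eq.
    + rewrite upd_neq by auto. destruct (is_root G u) eqn:E; auto.
      exfalso. apply n. eapply (c_root _ HC); eauto.
  - destruct HD as [HD|HD]. exact HD. exfalso. apply (HD v); auto.
  - pose proof (Phi_set_node G v NBlue false Hv) as H. rewrite Hr in H. simpl in H. lia.
Qed.

Lemma green_root G v r : Cinv G -> v < nnodes G -> is_root G v = true ->
  Dinv (set_node G v NGreen r) /\ Phi (set_node G v NGreen r) <= Phi G.
Proof.
  intros HC Hv Hroot. split; [split|].
  - apply Cinv_set_node; auto. discriminate.
    intros _ u Hu Hne. destruct (is_root G u) eqn:E; auto.
    exfalso. apply Hne. eapply (c_root _ HC); eauto.
  - right. intros u Hu. autorewrite with gp in *. destruct (Nat.eq_dec u v); subst.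
    + intros _. rewrite upd_eq. discriminate.
    + rewrite !upd_neq by auto. intros E. exfalso. apply n. eapply (c_root _ HC); eauto.
  - pose proof (Phi_set_node G v NGreen r Hv) as H. simpl in H. lia.
Qed.

Lemma L_set_flag G G' c : Cinv G -> rule_step r_set_flag G = (Some G', c) -> Dinv G' /\ Phi G' <= Phi G.
Proof.
  intros HC. unfold rule_step.
  destruct (root_of_mark G NRed) as [[v|] c0] eqn:Hs; intro H; inversion H; subst; clear H.
  apply root_of_mark_some in Hs as [Hv Hr]. apply in_root_list in Hv as [Hv Hroot].
  apply green_root; auto.
Qed.

Lemma L_loop G G' c : Cinv G -> rule_step r_loop G = (Some G', c) -> Dinv G' /\ Phi G' <= Phi G.
Proof.
  intros HC. unfold rule_step.
  destruct (root_edge_search _ _ _ _) as [[e|] c0] eqn:Hs; intro H; inversion H; subst; clear H.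
  apply res_some in Hs as [v [Hv [Hred [He _]]]]. apply in_root_list in Hv as [Hv Hroot].
  apply in_loop_list in He as [_ [Hs _]]. rewrite Hs.
  apply green_root; auto.
Qed.

Lemma L_flag G G' c : rule_step r_flag G = (Some G', c) -> G' = G.
Proof.
  unfold rule_step. destruct (root_of_mark G NGreen) as [[v|] c0]; intro H; inversion H; auto.
Qed.

Lemma L_next G G' c : Dinv G -> rule_step r_next_edge G = (Some G', c) -> Cinv G' /\ Phi G' < Phi G.
Proof.
  intros [HC HD]. unfold rule_step.
  destruct (root_edge_search _ _ _ _) as [[e|] c0] eqn:Hs; intro H; inversion H; subst; clear H.
  apply res_some in Hs as [v [Hv [Hred [He _]]]]. apply in_root_list in Hv as [Hv Hroot].
  apply in_out_list in He as [He [Hsrc [Htgt Hm]]].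
  assert (HNE : NoRedE G).
  { destruct HD as [HD|HD]; auto. exfalso. apply (HD v); auto. apply is_red_eq; auto. }
  split.
  - apply Cinv_set_edge; auto. discriminate.
  - pose proof (Phi_set_edge G e ERed He) as H. rewrite Hm in H. simpl in H. lia.
Qed.

Lemma noredE_after G e mu : Cinv G -> e < nedges G -> mu <> ERed -> emark_of G e = ERed ->
  NoRedE (set_edge G e mu).
Proof.
  intros HC He Hmu Hr i Hi. autorewrite with gp in *. destruct (Nat.eq_dec i e); subst.
  - rewrite upd_eq. auto.
  - rewrite upd_neq by auto. intros E. apply n. eapply (c_red _ HC); eauto.
Qed.

Lemma L_ignore G G' c : Cinv G -> rule_step r_ignore G = (Some G', c) -> Dinv G' /\ Phi G' <= Phi G.
Proof.
  intros HC. unfold rule_step.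
  destruct (root_edge_search _ _ _ _) as [[e|] c0] eqn:Hs; intro H; inversion H; subst; clear H.
  apply res_some in Hs as [v [Hv [Hred [He _]]]].
  apply in_out_list in He as [He [Hsrc [Htgt Hm]]].
  split; [split|].
  - apply Cinv_set_edge; auto; discriminate.
  - left. apply noredE_after; auto. discriminate.
  - pose proof (Phi_set_edge G e EBlue He) as H. rewrite Hm in H. simpl in H. lia.
Qed.

Lemma L_move G G' c : Cinv G -> rule_step r_move G = (Some G', c) -> Dinv G' /\ Phi G' <= Phi G.
Proof.
  intros HC. unfold rule_step.
  destruct (root_edge_search _ _ _ _) as [[e|] c0] eqn:Hs; intro H; inversion H; subst; clear H.
  apply res_some in Hs as [v [Hv [Hred [He Hok]]]]. apply in_root_list in Hv as [Hv Hroot].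
  apply in_out_list in He as [He [Hsrc [Htgt Hm]]].
  apply andb_prop in Hok as [Hok Hnr]. apply andb_prop in Hok as [_ Hgr].
  apply nmark_eqb_eq in Hgr. apply negb_true_iff in Hnr.
  pose proof (c_wf _ HC e He) as [Hs' Ht'].
  rewrite Hsrc in *.
  set (t := tgt G e) in *.
  set (G1 := set_node G v NRed false).
  set (G2 := set_node G1 t NRed true).
  assert (HC1 : Cinv G1) by (apply Cinv_set_node; auto; discriminate).
  assert (HC2 : Cinv G2).
  { apply Cinv_set_node; auto. discriminate. intros _ u Hu Hne. unfold G1.
    autorewrite with gp. destruct (Nat.eq_dec u v); subst. apply upd_eq.
    rewrite upd_neq by auto. destruct (is_root G u) eqn:E; auto.
    exfalso. apply n. eapply (c_root _ HC); eauto. }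
  assert (Hm2 : emark_of G2 e = ERed) by exact Hm.
  split; [split|].
  - apply Cinv_set_edge; auto. discriminate.
    intros _. unfold G2, G1. autorewrite with gp. rewrite upd_eq. split. discriminate.
    intros j Hj Hne Hd Ht. autorewrite with gp in *. apply (c_dashg _ HC j); auto. rewrite Ht. auto.
  - left. apply noredE_after; auto. discriminate.
  - pose proof (Phi_set_edge G2 e EDashed He) as H1. rewrite Hm2 in H1. simpl in H1.
    pose proof (Phi_set_node G1 t NRed true Ht') as H2. unfold G1 in H2.
    autorewrite with gp in H2. rewrite upd_neq in H2 by auto. rewrite Hgr in H2. simpl in H2.
    pose proof (Phi_set_node G v NRed false Hs') as H3. rewrite (is_red_eq _ _ Hred) in H3. simpl in H3.
    fold G1 in H2. fold G2 in H1, H2. fold G1 in H3. lia.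
Qed.

Lemma L_back G G' c : Dinv G -> rule_step r_back G = (Some G', c) -> Dinv G' /\ Phi G' < Phi G.
Proof.
  intros [HC HD]. unfold rule_step.
  destruct (root_edge_search _ _ _ _) as [[e|] c0] eqn:Hs; intro H; inversion H; subst; clear H.
  apply res_some in Hs as [v [Hv [Hred [He Hok]]]]. apply in_root_list in Hv as [Hv Hroot].
  apply in_in_list in He as [He [Htgt [Hsrc Hm]]].
  apply andb_prop in Hok as [Hok Hnr]. apply andb_prop in Hok as [_ Hsr].
  apply is_red_eq in Hsr. apply negb_true_iff in Hnr.
  pose proof (c_wf _ HC e He) as [Hs' Ht'].
  rewrite Htgt in *.
  set (s := src G e) in *.
  assert (HNE : NoRedE G).
  { destruct HD as [HD|HD]; auto. exfalso. apply (HD v); auto. apply is_red_eq; auto. }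
  set (G1 := set_node G s NRed true).
  set (G2 := set_node G1 v NBlue false).
  split; [split|].
  - constructor.
    + exact (c_wf _ HC).
    + intros a b Ha Hb. unfold G2, G1. autorewrite with gp.
      destruct (Nat.eq_dec a v); [subst; rewrite upd_eq; discriminate|].
      destruct (Nat.eq_dec b v); [subst; rewrite upd_eq; discriminate|].
      rewrite !(upd_neq _ v) by auto.
      destruct (Nat.eq_dec a s); destruct (Nat.eq_dec b s); subst; auto;
        rewrite ?upd_eq, ?upd_neq by auto; intros H1 H2.
      all: exfalso; match goal with H : is_root _ ?x = true, Hn : ?x <> tgt _ _ |- _ =>
             apply Hn; eapply (c_root _ HC); eauto end.
    + intros a Ha. unfold G2, G1. autorewrite with gp.
      destruct (Nat.eq_dec a v); [subst; rewrite upd_eq; discriminate|].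
      rewrite !(upd_neq _ v) by auto.
      destruct (Nat.eq_dec a s); [subst; rewrite upd_eq; discriminate|].
      rewrite !upd_neq by auto. apply (c_grey _ HC); auto.
    + intros i j Hi Hj. unfold G2, G1. autorewrite with gp.
      destruct (Nat.eq_dec i e); destruct (Nat.eq_dec j e); subst;
        rewrite ?upd_eq, ?upd_neq by auto; try discriminate; auto.
      apply (c_dash _ HC); auto.
    + intros i Hi. unfold G2, G1. autorewrite with gp.
      destruct (Nat.eq_dec i e); [subst; rewrite upd_eq; discriminate|].
      rewrite upd_neq by auto. intros Hd.
      destruct (Nat.eq_dec (tgt G i) v) as [E|E]; [rewrite E, upd_eq; discriminate|].
      rewrite upd_neq by auto.
      destruct (Nat.eq_dec (tgt G i) s) as [E'|E']; [rewrite E', upd_eq; discriminate|].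
      rewrite upd_neq by auto. apply (c_dashg _ HC); auto.
    + intros i j Hi Hj. unfold G2, G1. autorewrite with gp.
      destruct (Nat.eq_dec i e); destruct (Nat.eq_dec j e); subst;
        rewrite ?upd_eq, ?upd_neq by auto; try discriminate; auto.
      apply (c_red _ HC); auto.
  - left. intros i Hi. unfold G2, G1. autorewrite with gp.
    destruct (Nat.eq_dec i e); subst; rewrite ?upd_eq, ?upd_neq by auto. discriminate. apply HNE; auto.
  - pose proof (Phi_set_edge G2 e EBlue He) as H1. unfold G2, G1 in H1. autorewrite with gp in H1.
    rewrite Hm in H1. simpl in H1.
    pose proof (Phi_set_node G1 v NBlue false Hv) as H2. unfold G1 in H2.
    autorewrite with gp in H2. rewrite upd_neq in H2 by auto. rewrite (is_red_eq _ _ Hred) in H2. simpl in H2.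
    pose proof (Phi_set_node G s NRed true Hs') as H3. rewrite Hsr in H3. simpl in H3.
    fold G1 in H2, H1. fold G2 in H1, H2. fold G1 in H3. lia.
Qed.

Lemma skip_inv G o k : exec Skip G o k -> o = Ok G /\ k = 1.
Proof. intros H; inversion H; auto. Qed.
Lemma break_inv G o k : exec Break G o k -> o = Broke G /\ k = 1.
Proof. intros H; inversion H; auto. Qed.
Lemma fail_inv G o k : exec Fail G o k -> o = Failed /\ k = 1.
Proof. intros H; inversion H; auto. Qed.
Lemma try_inv c p q G o k : exec (TryElse c p q) G o k ->
  (exists G1 k1 k2, exec c G (Ok G1) k1 /\ exec p G1 o k2 /\ k = k1 + k2 + 1) \/
  (exists k1 k2, exec c G Failed k1 /\ exec q G o k2 /\ k = 2 * k1 + k2 + 1) \/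
  (exists G1 k1, exec c G (Broke G1) k1 /\ o = Broke G1 /\ k = k1 + 1).
Proof. intros H; inversion H; subst; eauto 10. Qed.
Lemma seq_inv c p G o k : exec (Seq c p) G o k ->
  (exists G1 k1 k2, exec c G (Ok G1) k1 /\ exec p G1 o k2 /\ k = k1 + k2 + 1) \/
  (exists k1, exec c G Failed k1 /\ o = Failed /\ k = k1 + 1) \/
  (exists G1 k1, exec c G (Broke G1) k1 /\ o = Broke G1 /\ k = k1 + 1).
Proof. intros H; inversion H; subst; eauto 10. Qed.
Lemma if_inv c p q G o k : exec (IfElse c p q) G o k ->
  (exists G1 k1 k2, exec c G (Ok G1) k1 /\ exec p G o k2 /\ k = 2 * k1 + k2 + 1) \/
  (exists k1 k2, exec c G Failed k1 /\ exec q G o k2 /\ k = 2 * k1 + k2 + 1) \/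
  (exists G1 k1, exec c G (Broke G1) k1 /\ o = Broke G1 /\ k = k1 + 1).
Proof. intros H; inversion H; subst; eauto 10. Qed.

Lemma call_inv rs G o k : exec (Call rs) G o k -> exists oo c, call_rules rs G = (oo, c) /\ k = c + 1 /\
  o = match oo with Some G' => Ok G' | None => Failed end.
Proof. intros H; inversion H; subst; eauto. Qed.

Lemma call1_exec r G o k : exec (Call [r]) G o k -> Cinv G -> k <= 8 /\
  ((exists G' c, rule_step r G = (Some G', c) /\ o = Ok G') \/ o = Failed).
Proof.
  intros H HC. apply call_inv in H as [oo [c [H3 [-> ->]]]]. pose proof (rule_cost r G HC) as Hc.
  simpl in H3. destruct (rule_step r G) as [[G'|] c'] eqn:E; simpl in *;
    inversion H3; subst; rewrite ?Nat.add_0_r in *; split; eauto; lia.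
Qed.

Lemma call2_exec a b G o k : exec (Call [a; b]) G o k -> Cinv G -> k <= 15 /\
  ((exists G' c, (rule_step a G = (Some G', c) \/ rule_step b G = (Some G', c)) /\ o = Ok G') \/ o = Failed).
Proof.
  intros H HC. apply call_inv in H as [oo [c [H3 [-> ->]]]]. pose proof (rule_cost a G HC) as Hc.
  pose proof (rule_cost b G HC) as Hc2.
  simpl in H3. destruct (rule_step a G) as [[G'|] c'] eqn:E; simpl in *.
  - inversion H3; subst. split; [lia|]. left; eauto.
  - destruct (rule_step b G) as [[G'|] c''] eqn:E2; simpl in *;
      inversion H3; subst; rewrite ?Nat.add_0_r in *; split; try lia; eauto 10.
Qed.

Lemma call_nobreak rs G G' k : exec (Call rs) G (Broke G') k -> False.
Proof. intros H; apply call_inv in H as [oo [c [_ [_ E]]]]. destruct oo; discriminate. Qed.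

Lemma Dinv_C G : Dinv G -> Cinv G. Proof. intros [H _]; auto. Qed.

Lemma S_loopskip G o k : Dinv G -> exec (TryElse (Call [r_loop]) Skip Skip) G o k ->
  k <= 20 /\ exists G1, o = Ok G1 /\ Dinv G1 /\ Phi G1 <= Phi G.
Proof.
  intros HD H. apply try_inv in H as [[G1 [k1 [k2 [H1 [H2 ->]]]]] | [[k1 [k2 [H1 [H2 ->]]]] | [G1 [k1 [H1 _]]]]].
  - apply call1_exec in H1 as [Hk [[G' [c [E E']]] | E']]; [|discriminate| apply Dinv_C; auto].
    inversion E'; subst. apply L_loop in E as [? ?]; [|apply Dinv_C; auto].
    apply skip_inv in H2 as [-> ->]. split; [lia|]. eauto.
  - apply call1_exec in H1 as [Hk _]; [|apply Dinv_C; auto].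
    apply skip_inv in H2 as [-> ->]. split; [lia|]. eauto.
  - exfalso; eapply call_nobreak; eauto.
Qed.

Lemma S_back G o k : Dinv G -> exec (TryElse (Call [r_back]) Skip Break) G o k ->
  k <= 20 /\ ((exists G1, o = Ok G1 /\ Dinv G1 /\ Phi G1 < Phi G) \/ o = Broke G).
Proof.
  intros HD H. apply try_inv in H as [[G1 [k1 [k2 [H1 [H2 ->]]]]] | [[k1 [k2 [H1 [H2 ->]]]] | [G1 [k1 [H1 _]]]]].
  - apply call1_exec in H1 as [Hk [[G' [c [E E']]] | E']]; [|discriminate| apply Dinv_C; auto].
    inversion E'; subst. apply L_back in E as [? ?]; [|auto].
    apply skip_inv in H2 as [-> ->]. split; [lia|]. eauto.
  - apply call1_exec in H1 as [Hk _]; [|apply Dinv_C; auto].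
    apply break_inv in H2 as [-> ->]. split; [lia|]. eauto.
  - exfalso; eapply call_nobreak; eauto.
Qed.

Lemma S_unroot G o k : Dinv G -> exec (TryElse (Call [r_unroot]) Skip Break) G o k ->
  k <= 20 /\ ((exists G1, o = Ok G1 /\ Oinv G1 /\ Phi G1 <= Phi G) \/ o = Broke G).
Proof.
  intros HD H. apply try_inv in H as [[G1 [k1 [k2 [H1 [H2 ->]]]]] | [[k1 [k2 [H1 [H2 ->]]]] | [G1 [k1 [H1 _]]]]].
  - apply call1_exec in H1 as [Hk [[G' [c [E E']]] | E']]; [|discriminate| apply Dinv_C; auto].
    inversion E'; subst. apply L_unroot in E as [? ?]; [|auto].
    apply skip_inv in H2 as [-> ->]. split; [lia|]. eauto.
  - apply call1_exec in H1 as [Hk _]; [|apply Dinv_C; auto].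
    apply break_inv in H2 as [-> ->]. split; [lia|]. eauto.
  - exfalso; eapply call_nobreak; eauto.
Qed.

Lemma S_mi G o k : Cinv G ->
  exec (TryElse (Call [r_move; r_ignore]) Skip (Seq (Call [r_set_flag]) Break)) G o k ->
  k <= 50 /\ ((exists G1, o = Ok G1 /\ Dinv G1 /\ Phi G1 <= Phi G) \/
              (exists G1, o = Broke G1 /\ Dinv G1 /\ Phi G1 <= Phi G) \/ o = Failed).
Proof.
  intros HC H. apply try_inv in H as [[G1 [k1 [k2 [H1 [H2 ->]]]]] | [[k1 [k2 [H1 [H2 ->]]]] | [G1 [k1 [H1 _]]]]].
  - apply call2_exec in H1 as [Hk [[G' [c [E E']]] | E']]; [|discriminate|auto].
    inversion E'; subst.
    assert (Dinv G' /\ Phi G' <= Phi G) as [? ?].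
    { destruct E as [E|E]; [eapply L_move | eapply L_ignore]; eauto. }
    apply skip_inv in H2 as [-> ->]. split; [lia|]. eauto.
  - apply call2_exec in H1 as [Hk _]; [|auto].
    apply seq_inv in H2 as [[G1 [k3 [k4 [H3 [H4 ->]]]]] | [[k3 [H3 [-> ->]]] | [G1 [k3 [H3 _]]]]].
    + apply call1_exec in H3 as [Hk3 [[G' [c [E E']]] | E']]; [|discriminate|auto].
      inversion E'; subst. apply L_set_flag in E as [? ?]; auto.
      apply break_inv in H4 as [-> ->]. split; [lia|]. right; left; eauto.
    + apply call1_exec in H3 as [Hk3 _]; auto. split; [lia|]. auto.
    + exfalso; eapply call_nobreak; eauto.
  - exfalso; eapply call_nobreak; eauto.
Qed.

Definition DFSspec G o :=
  match o with
  | Ok G' => Dinv G' /\ Phi G' < Phi G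
  | Broke G' => Dinv G' /\ Phi G' <= Phi G
  | Failed => True
  end.

Lemma S_DFS G o k : Dinv G -> exec DFS G o k -> k <= 100 /\ DFSspec G o.
Proof.
  intros HD H. unfold DFS in H.
  apply try_inv in H as [[G1 [k1 [k2 [H1 [H2 ->]]]]] | [[k1 [k2 [H1 [H2 ->]]]] | [G1 [k1 [H1 _]]]]].
  - apply call1_exec in H1 as [Hk [[G' [c [E E']]] | E']]; [|discriminate| apply Dinv_C; auto].
    inversion E'; subst. apply L_next in E as [HC1 HP1]; auto.
    apply S_mi in H2 as [Hk2 [[G2 [-> [? ?]]] | [[G2 [-> [? ?]]] | ->]]]; auto;
      split; try lia; simpl; auto; split; auto; lia.
  - apply call1_exec in H1 as [Hk _]; [|apply Dinv_C; auto].
    apply seq_inv in H2 as [[G1 [k3 [k4 [H3 [H4 ->]]]]] | [[k3 [H3 [-> ->]]] | [G1 [k3 [H3 [-> ->]]]]]].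
    + apply S_loopskip in H3 as [Hk3 [G2 [E [HD2 HP2]]]]; auto. inversion E; subst.
      apply S_back in H4 as [Hk4 [[G3 [-> [? ?]]] | ->]]; auto; split; try lia; simpl; split; auto; lia.
    + apply S_loopskip in H3 as [_ [G2 [E _]]]; auto. discriminate.
    + apply S_loopskip in H3 as [_ [G2 [E _]]]; auto. discriminate.
  - exfalso; eapply call_nobreak; eauto.
Qed.

Lemma S_LD G o k : exec (Loop DFS) G o k -> Dinv G ->
  exists G', o = Ok G' /\ Dinv G' /\ Phi G' <= Phi G /\ k <= 101 * (Phi G - Phi G') + 201.
Proof.
  intros H. remember (Loop DFS) as c eqn:Ec. induction H; try discriminate; inversion Ec; subst; intros HD.
  - apply S_DFS in H as [Hk [HD1 HP1]]; auto.
    destruct (IHexec2 eq_refl HD1) as [G2 [-> [HD2 [HP2 Hk2]]]].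
    exists G2. split; [auto|]. split; [auto|]. split; [lia|nia].
  - apply S_DFS in H as [Hk _]; auto. exists G. split; [auto|]. split; [auto|]. split; lia.
  - apply S_DFS in H as [Hk [HD1 HP1]]; auto. exists G'. split; [auto|]. split; [auto|]. split; lia.
Qed.

Definition body := Seq (Call [r_init]) (Seq (Loop DFS) (TryElse (Call [r_unroot]) Skip Break)).

Definition Bspec G o k :=
  match o with
  | Ok G' => Oinv G' /\ Phi G' < Phi G /\ k <= 101 * (Phi G - Phi G') + 300
  | Broke G' => Cinv G' /\ Phi G' <= Phi G /\ k <= 101 * (Phi G - Phi G') + 300
  | Failed => k <= 300
  end.

Lemma S_body G o k : Oinv G -> exec body G o k -> Bspec G o k.
Proof.
  intros HO H. unfold body in H. assert (HC : Cinv G) by (destruct HO; auto).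
  apply seq_inv in H as [[G1 [k1 [k2 [H1 [H2 ->]]]]] | [[k1 [H1 [-> ->]]] | [G1 [k1 [H1 _]]]]].
  - apply call1_exec in H1 as [Hk [[G' [c [E E']]] | E']]; [|discriminate|auto].
    inversion E'; subst. apply L_init in E as [HD1 HP1]; auto.
    apply seq_inv in H2 as [[G2 [k3 [k4 [H3 [H4 ->]]]]] | [[k3 [H3 [-> ->]]] | [G2 [k3 [H3 [-> ->]]]]]].
    + apply S_LD in H3 as [G3 [E [HD3 [HP3 Hk3]]]]; auto. inversion E; subst.
      apply S_unroot in H4 as [Hk4 [[G4 [-> [HO4 HP4]]] | ->]]; auto; simpl.
      * split; [auto|]. split; lia.
      * split; [apply Dinv_C; auto|]. split; lia.
    + apply S_LD in H3 as [G3 [E _]]; auto. discriminate.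
    + apply S_LD in H3 as [G3 [E _]]; auto. discriminate.
  - apply call1_exec in H1 as [Hk _]; auto. simpl. lia.
  - exfalso; eapply call_nobreak; eauto.
Qed.

Lemma S_LO G o k : exec (Loop body) G o k -> Oinv G ->
  exists G', o = Ok G' /\ Cinv G' /\ Phi G' <= Phi G /\ k <= 500 * (Phi G - Phi G') + 700.
Proof.
  intros H. remember (Loop body) as c eqn:Ec. induction H; try discriminate; inversion Ec; subst; intros HO.
  - apply S_body in H as [HO1 [HP1 Hk1]]; auto.
    destruct (IHexec2 eq_refl HO1) as [G2 [-> [HC2 [HP2 Hk2]]]].
    exists G2. split; [auto|]. split; [auto|]. split; [lia|nia].
  - apply S_body in H; auto. simpl in H. exists G. split; [auto|]. split; [destruct HO; auto|]. split; lia.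
  - apply S_body in H as [HC1 [HP1 Hk1]]; auto. exists G'. split; [auto|]. split; [auto|]. split; lia.
Qed.

Lemma S_check G o k : Cinv G -> exec Check G o k -> k <= 30.
Proof.
  intros HC H. unfold Check in H.
  apply if_inv in H as [[G1 [k1 [k2 [H1 [H2 ->]]]]] | [[k1 [k2 [H1 [H2 ->]]]] | [G1 [k1 [H1 _]]]]].
  - apply call1_exec in H1 as [Hk _]; auto. apply fail_inv in H2 as [_ ->]. lia.
  - apply call1_exec in H1 as [Hk _]; auto. apply skip_inv in H2 as [_ ->]. lia.
  - exfalso; eapply call_nobreak; eauto.
Qed.

Fixpoint nl (c : cmd) : Prop :=
  match c with
  | Loop _ => False
  | Seq a b => nl a /\ nl b
  | TryElse a b d => nl a /\ nl b /\ nl d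
  | IfElse a b d => nl a /\ nl b /\ nl d
  | _ => True
  end.

Lemma total_nl c : nl c -> forall G, exists o k, exec c G o k.
Proof.
  induction c; simpl; intros Hn G.
  - destruct (call_rules rs G) as [o c] eqn:E. eexists; eexists; apply ex_call; eauto.
  - eexists; eexists; constructor.
  - eexists; eexists; constructor.
  - eexists; eexists; constructor.
  - destruct Hn as [H1 H2]. destruct (IHc1 H1 G) as [[G1| |G1] [k1 E1]].
    + destruct (IHc2 H2 G1) as [o [k2 E2]]. eexists; eexists; eapply ex_seq_ok; eauto.
    + eexists; eexists; eapply ex_seq_fail; eauto.
    + eexists; eexists; eapply ex_seq_break; eauto.
  - contradiction.
  - destruct Hn as [H1 [H2 H3]]. destruct (IHc1 H1 G) as [[G1| |G1] [k1 E1]].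
    + destruct (IHc2 H2 G1) as [o [k2 E2]]. eexists; eexists; eapply ex_try_ok; eauto.
    + destruct (IHc3 H3 G) as [o [k2 E2]]. eexists; eexists; eapply ex_try_fail; eauto.
    + eexists; eexists; eapply ex_try_break; eauto.
  - destruct Hn as [H1 [H2 H3]]. destruct (IHc1 H1 G) as [[G1| |G1] [k1 E1]].
    + destruct (IHc2 H2 G) as [o [k2 E2]]. eexists; eexists; eapply ex_if_ok; eauto.
    + destruct (IHc3 H3 G) as [o [k2 E2]]. eexists; eexists; eapply ex_if_fail; eauto.
    + eexists; eexists; eapply ex_if_break; eauto.
Qed.

Lemma ex_LD n : forall G, Phi G < n -> Dinv G -> exists o k, exec (Loop DFS) G o k.
Proof.
  induction n; intros G Hn HD; [lia|].
  destruct (total_nl DFS ltac:(simpl; tauto) G) as [[G1| |G1] [k1 E1]].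
  - pose proof (S_DFS _ _ _ HD E1) as [_ [HD1 HP1]].
    destruct (IHn G1 ltac:(lia) HD1) as [o [k2 E2]]. eexists; eexists; eapply ex_loop_ok; eauto.
  - eexists; eexists; eapply ex_loop_fail; eauto.
  - eexists; eexists; eapply ex_loop_break; eauto.
Qed.

Lemma ex_body G : Oinv G -> exists o k, exec body G o k.
Proof.
  intros HO. assert (HC : Cinv G) by (destruct HO; auto).
  destruct (total_nl (Call [r_init]) I G) as [o1 [k1 E1]].
  pose proof E1 as E1'. apply call1_exec in E1' as [_ [[G1 [c [E ->]]] | ->]]; auto.
  - apply L_init in E as [HD1 _]; auto.
    destruct (ex_LD (S (Phi G1)) G1 ltac:(lia) HD1) as [o2 [k2 E2]].
    pose proof E2 as E2'. apply S_LD in E2' as [G2 [-> [HD2 _]]]; auto.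
    destruct (total_nl (TryElse (Call [r_unroot]) Skip Break) ltac:(simpl; tauto) G2) as [o3 [k3 E3]].
    eexists; eexists. eapply ex_seq_ok; eauto. eapply ex_seq_ok; eauto.
  - eexists; eexists. eapply ex_seq_fail; eauto.
Qed.

Lemma ex_LO n : forall G, Phi G < n -> Oinv G -> exists o k, exec (Loop body) G o k.
Proof.
  induction n; intros G Hn HO; [lia|].
  destruct (ex_body G HO) as [[G1| |G1] [k1 E1]].
  - pose proof (S_body _ _ _ HO E1) as [HO1 [HP1 _]].
    destruct (IHn G1 ltac:(lia) HO1) as [o [k2 E2]]. eexists; eexists; eapply ex_loop_ok; eauto.
  - eexists; eexists; eapply ex_loop_fail; eauto.
  - eexists; eexists; eapply ex_loop_break; eauto.
Qed.

Theorem mainTheorem5 :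
  exists c : nat,
    forall G : hgraph,
      wf_graph G -> initial_graph G ->
      (exists (o : outcome) (k : nat), exec is_dag G o k) /\
      (forall (o : outcome) (k : nat),
          exec is_dag G o k -> k <= c * (nnodes G + nedges G) + c).
Proof.
  exists 2000. intros G Hwf [Hn He].
  assert (HO : Oinv G).
  { split; [constructor|split].
    - auto.
    - intros u v Hu Hv Hr. rewrite (proj2 (Hn u Hu)) in Hr. discriminate.
    - intros v Hv _. apply Hn; auto.
    - intros i j Hi _ Hd. rewrite He in Hd by auto. discriminate.
    - intros i Hi Hd. rewrite He in Hd by auto. discriminate.
    - intros i j Hi _ Hd. rewrite He in Hd by auto. discriminate.
    - intros v Hv. apply Hn; auto.
    - intros i Hi. rewrite He by auto. discriminate. }
  pose proof (Phi_bound G) as HB.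
  split.
  - destruct (ex_LO (S (Phi G)) G ltac:(lia) HO) as [o1 [k1 E1]].
    pose proof E1 as E1'. apply S_LO in E1' as [G1 [-> [HC1 _]]]; auto.
    destruct (total_nl Check ltac:(simpl; tauto) G1) as [o2 [k2 E2]].
    eexists; eexists. unfold is_dag. eapply ex_seq_ok; eauto.
  - intros o k H. unfold is_dag in H.
    apply seq_inv in H as [[G1 [k1 [k2 [H1 [H2 ->]]]]] | [[k1 [H1 _]] | [G1 [k1 [H1 _]]]]].
    + fold body in H1. apply S_LO in H1 as [G2 [E [HC2 [HP2 Hk1]]]]; auto. inversion E; subst.
      apply S_check in H2; auto. lia.
    + fold body in H1. apply S_LO in H1 as [G2 [E _]]; auto. discriminate.
    + fold body in H1. apply S_LO in H1 as [G2 [E _]]; auto. discriminate.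
Qed.
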